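(* Let $\mathbf{k}$ be a commutative ring, $n\ge 0$, and $\mathcal{A}=\mathbf{k}[S_n]$. If $\alpha,\beta\in\operatorname{Comp}_n$ are anagrams (that is, $\widetilde{\alpha}=\widetilde{\beta}$), then $\mathcal{R}_\alpha=\mathcal{R}_\beta$.
   Context: $S_n$ is the symmetric group on $[n]=\{1,\dots,n\}$, with product $(uw)(i)=u(w(i))$. For $w\in S_n$, $\operatorname{Des}(w)=\{i\in[n-1]: w(i)>w(i+1)\}$. For $I\subseteq[n-1]$, $\mathbf{B}_I=\sum_{w\in S_n,\ \operatorname{Des}(w)\subseteq I} w\in\mathcal{A}$. A composition $\alpha=(\alpha_1,\dots,\alpha_p)$ of $n$ is a finite sequence of positive integers with sum $n$; $\operatorname{Comp}_n$ is the set of these. $\operatorname{Set}(\alpha)=\{\alpha_1,\alpha_1+\alpha_2,\dots,\alpha_1+\cdots+\alpha_{p-1}\}\subseteq[n-1]$, and $\mathbf{B}_\alpha:=\mathbf{B}_{\operatorname{Set}(\alpha)}$. The underlying partition $\widetilde{\alpha}$ is obtained by sorting the parts of $\alpha$ in weakly decreasing order; $\alpha,\beta$ are anagrams if $\widetilde\alpha=\widetilde\beta$. For $\beta\in\operatorname{Comp}_n$, $\mathcal{R}_\beta:=\mathbf{B}_\beta\mathcal{A}$ (a right ideal of $\mathcal{A}$). *)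

(* Defs.v *)
From HB Require Import structures.
From mathcomp Require Import all_boot all_order all_algebra all_fingroup.
Set Implicit Arguments. Unset Strict Implicit. Unset Printing Implicit Defensive.
Import GRing.Theory.
Local Open Scope ring_scope.

(* The group algebra k[S_n], elements are finitely supported functions
   'S_n -> k, i.e. {ffun 'S_n -> k}; element w of S_n corresponds to the
   indicator of w.  'S_n acts on 'I_n = {0,...,n-1} (0-indexed version of [n]).

   Paper convention: (uw)(i) = u(w(i)).  MathComp convention:
   (s * t)%g x = t (s x).  Hence the paper's product uw is (w * u)%g. *)

Definition gmul (k : comPzRingType) (n : nat) (f g : {ffun 'S_n -> k})
  : {ffun 'S_n -> k} :=
  [ffun x : 'S_n => \sum_(u : 'S_n) \sum_(w : 'S_n)
      (if ((w * u)%g == x) then f u * g w else 0)].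

(* Descent set, 1-indexed as in the paper: i \in Des w iff 1 <= i <= n-1
   and w(i) > w(i+1).  With 0-indexed positions, paper position i is
   'I_n element i-1. *)
Definition isDes (n : nat) (w : 'S_n) (i : nat) : bool :=
  [exists j : 'I_n, [exists j' : 'I_n,
     [&& j.+1 == i, val j' == j.+1 & (w j' < w j)%N]]].

Definition BI (k : comPzRingType) (n : nat) (I : pred nat) : {ffun 'S_n -> k} :=
  [ffun w : 'S_n => if [forall i : 'I_n, isDes w i ==> ((i : nat) \in I)] then 1 else 0].

Definition is_comp (n : nat) (a : seq nat) : bool :=
  all (fun x => 0 < x)%N a && (sumn a == n).

Definition setc (a : seq nat) : seq nat :=
  [seq sumn (take k a) | k <- iota 1 (size a).-1].

Definition Balpha (k : comPzRingType) (n : nat) (a : seq nat) : {ffun 'S_n -> k} :=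
  BI k n (fun i => i \in setc a).

Definition underlying (a : seq nat) : seq nat := sort geq a.

Definition anagrams (a b : seq nat) : Prop := underlying a = underlying b.

Definition Rideal (k : comPzRingType) (n : nat) (b : seq nat)
  (x : {ffun 'S_n -> k}) : Prop :=
  exists y : {ffun 'S_n -> k}, x = gmul (Balpha k n b) y.

(* Main.v *)
Require Import Defs.
From mathcomp Require Import all_boot all_order all_algebra all_fingroup.
From mathcomp Require Import zify.
Set Implicit Arguments. Unset Strict Implicit. Unset Printing Implicit Defensive.

Definition pin m a b i :=
  if i < m then i else if i < m + b then i + a else if i < m + a + b then i - b else i.

Lemma pinK m a b i : pin m b a (pin m a b i) = i.
Proof.
rewrite {2}/pin. case: (ltnP i m) => ?; case: (ltnP i (m + b)) => ?;
case: (ltnP i (m + a + b)) => ?; rewrite /pin; do ? case: ltnP => ?; lia.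
Qed.

Lemma setcP a i :
  reflect (exists2 k, (0 < k < size a)%N & sumn (take k a) = i) (i \in setc a).
Proof.
apply: (iffP mapP) => [[k Hk ->]|[k Hk <-]]; exists k => //; move: Hk;
rewrite mem_iota; lia.
Qed.

Lemma PSlow (p q : seq nat) k : k <= size p -> sumn (take k (p ++ q)) = sumn (take k p).
Proof.
move=> Hk; rewrite take_cat; case: ltnP => H //.
have -> : k = size p by lia.
by rewrite take_size subnn take0 cats0.
Qed.

Lemma PSle (p : seq nat) k : sumn (take k p) <= sumn p.
Proof. by rewrite -{2}(cat_take_drop k p) sumn_cat leq_addr. Qed.

Lemma PShigh (p q : seq nat) k : sumn (take (size p + k) (p ++ q)) = sumn p + sumn (take k q).
Proof.
rewrite take_cat; case: ltnP => H; first lia.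
by rewrite sumn_cat addKn.
Qed.

Lemma key_nat p a b s j :
  j.+1 < sumn (p ++ a :: b :: s) -> j.+1 \notin setc (p ++ b :: a :: s) ->
  pin (sumn p) a b j.+1 = (pin (sumn p) a b j).+1 /\
  pin (sumn p) a b j.+1 \notin setc (p ++ a :: b :: s).
Proof.
move=> Hn Hnot. set m := sumn p.
have sumal : sumn (p ++ a :: b :: s) = m + a + b + sumn s by rewrite sumn_cat /=; lia.
have szbe : size (p ++ b :: a :: s) = size p + 2 + size s by rewrite size_cat /=; lia.
have szal : size (p ++ a :: b :: s) = size p + 2 + size s by rewrite size_cat /=; lia.
have PS2 : forall x y k', sumn (take (size p + 2 + k') (p ++ x :: y :: s)) =
                         m + x + y + sumn (take k' s).
  by move=> x y k'; rewrite -addnA PShigh [2 + k']addnC addn2 /=; lia.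
have H1 : j.+1 != m.
  apply/negP => /eqP E; case: (posnP (size p)) => Hp.
    by move/eqP: Hp; rewrite size_eq0 => /eqP Hp0; rewrite /m Hp0 in E.
  apply/(negP Hnot)/setcP; exists (size p); first lia.
  by rewrite PSlow // take_size E.
have H2 : j.+1 != m + b.
  apply/negP => /eqP E; apply/(negP Hnot)/setcP; exists (size p + 1); first lia.
  by rewrite PShigh /= E addn0.
have H3 : j.+1 != m + a + b.
  apply/negP => /eqP E; case: s Hnot Hn sumal szbe szal PS2 => [|x s] Hnot Hn sumal szbe szal PS2.
    by rewrite sumal /= in Hn; lia.
  apply/(negP Hnot)/setcP; exists (size p + 2 + 0); first by rewrite szbe /=; lia.
  by rewrite PS2 take0 /= E; lia.
rewrite sumal in Hn.
split.
  rewrite /pin; do ? case: ltnP => ?; lia.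
apply/negP => /setcP [k Hk E].
case: (leqP k (size p)) => Hk1.
  rewrite PSlow // in E.
  have := PSle p k; rewrite -/m => Hle.
  have Ej : j.+1 = sumn (take k p).
    move: E; rewrite /pin; do ? case: ltnP => ?; lia.
  apply/(negP Hnot)/setcP; exists k; first lia.
  by rewrite PSlow.
case: (eqVneq k (size p + 1)) => Hk2.
  move: E; rewrite Hk2 PShigh /= addn0 /pin; do ? case: ltnP => ?; lia.
have [k' Ek'] : exists k', k = size p + 2 + k' by exists (k - (size p + 2)); lia.
rewrite Ek' PS2 in E.
have Ej : j.+1 = m + a + b + sumn (take k' s).
  move: E; rewrite /pin; do ? case: ltnP => ?; lia.
apply/(negP Hnot)/setcP; exists k; first lia.
by rewrite Ek' PS2 Ej; lia.
Qed.

Definition G n (a : seq nat) (w : 'S_n) : bool :=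
  [forall j : 'I_n, forall j' : 'I_n,
    (val j' == j.+1) ==> (val j' \notin setc a) ==> (w j < w j')%N].

Lemma BIE (k : comPzRingType) n a w :
  Balpha k n a w = if G a w then 1%R else 0%R.
Proof.
rewrite /Balpha /BI ffunE; congr (if _ then _ else _).
apply/forallP/forallP.
  move=> H j; apply/forallP => j'; apply/implyP => /eqP Ej; apply/implyP => Hn.
  have Hjj : j != j' by apply/negP => /eqP E; move: Ej; rewrite E /=; lia.
  have Hw : w j != w j' by rewrite (inj_eq perm_inj).
  rewrite ltn_neqAle Hw /= leqNgt; apply/negP => Hlt.
  apply: (negP Hn); apply: (implyP (H j')).
  apply/existsP; exists j; apply/existsP; exists j'; apply/and3P; split => //; apply/eqP; by rewrite Ej.
move=> H i; apply/implyP => /existsP [j /existsP [j' /and3P [/eqP Ej /eqP Ej' Hlt]]].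
apply/negPn/negP => Hn.
have := forallP (H j) j'; rewrite Ej' eqxx /= Ej.
have -> : (val i \notin setc a) = true by apply/negP => Hi; move/negP: Hn; apply.
by rewrite /= ltnNge (ltnW Hlt).
Qed.

Lemma G_swap n p a b s (w c : 'S_n) :
  (forall i, val (c i) = pin (sumn p) a b i) ->
  sumn (p ++ a :: b :: s) = n ->
  G (p ++ a :: b :: s) w -> G (p ++ b :: a :: s) (c * w)%g.
Proof.
move=> Hc Hsum /forallP Hw.
apply/forallP => j; apply/forallP => j'; apply/implyP => /eqP Ej; apply/implyP => Hn.
rewrite !permM.
have Hlt : j.+1 < sumn (p ++ a :: b :: s) by rewrite Hsum -Ej ltn_ord.
rewrite Ej in Hn.
have [E1 E2] := key_nat Hlt Hn.
have := forallP (Hw (c j)) (c j'); rewrite !Hc Ej E1 eqxx /= -E1 E2 /=.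
by [].
Qed.

Definition fsw n m a b (i : 'I_n) : 'I_n := insubd i (pin m a b i).

Lemma fsw_val n m a b (i : 'I_n) : m + a + b <= n -> val (fsw m a b i) = pin m a b (val i).
Proof.
move=> H; rewrite /fsw val_insubd.
have : pin m a b i < n.
  have := ltn_ord i; rewrite /pin; case: (ltnP i m) => ?; case: (ltnP i (m + b)) => ?; case: (ltnP i (m + a + b)) => ?; lia.
by move=> ->.
Qed.

Lemma fsw_can n m a b : m + a + b <= n -> cancel (@fsw n m a b) (@fsw n m b a).
Proof.
move=> H i; apply: val_inj; rewrite fsw_val; last lia.
by rewrite fsw_val // pinK.
Qed.

Lemma B_swap (k : comPzRingType) n p a b s :
  sumn (p ++ a :: b :: s) = n ->
  exists c : 'S_n, forall u,
    Balpha k n (p ++ b :: a :: s) u = Balpha k n (p ++ a :: b :: s) (c * u)%g.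
Proof.
move=> Hsum.
have Hle : sumn p + a + b <= n by rewrite -Hsum sumn_cat /=; lia.
have Hle' : sumn p + b + a <= n by lia.
pose cab := perm (can_inj (fsw_can Hle)).
pose cba := perm (can_inj (fsw_can Hle')).
have Hab : forall i, val (cab i) = pin (sumn p) a b i by move=> i; rewrite permE fsw_val.
have Hba : forall i, val (cba i) = pin (sumn p) b a i by move=> i; rewrite permE fsw_val.
have Hsum' : sumn (p ++ b :: a :: s) = n by rewrite -Hsum !sumn_cat /=; lia.
have Hid : (cab * cba = 1)%g.
  by apply/permP => i; apply: val_inj; rewrite permM perm1 Hba Hab pinK.
exists cba => u; rewrite !BIE; congr (if _ then _ else _).
apply/idP/idP => H.
  exact: (G_swap (a := b) (b := a) Hba Hsum' H).
have := G_swap (a := a) (b := b) Hab Hsum H.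
by rewrite mulgA Hid mul1g.
Qed.

Lemma gmul_shift (k : comPzRingType) n (f f' y : {ffun 'S_n -> k}) (c : 'S_n) :
  (forall u, f' u = f (c * u)%g) -> gmul f' y = gmul f [ffun w => y (w * c)%g].
Proof.
move=> Hf; apply/ffunP => x; rewrite !ffunE.
rewrite (reindex_inj (mulgI c^-1%g)) /=. apply: eq_bigr => u _.
rewrite (reindex_inj (mulIg c)) /=. apply: eq_bigr => w _.
by rewrite Hf mulKVg ffunE -mulgA mulKVg.
Qed.

Lemma Rideal_shift (k : comPzRingType) n a b :
  (exists c : 'S_n, forall u, Balpha k n b u = Balpha k n a (c * u)%g) ->
  forall x, @Rideal k n b x -> @Rideal k n a x.
Proof.
move=> [c Hc] x [y ->]; exists [ffun w => y (w * c)%g]; exact: gmul_shift.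
Qed.

Lemma Rideal_swap (k : comPzRingType) n p a b s :
  sumn (p ++ a :: b :: s) = n ->
  forall x, @Rideal k n (p ++ a :: b :: s) x <-> @Rideal k n (p ++ b :: a :: s) x.
Proof.
move=> Hsum x; have [c Hc] := B_swap k Hsum.
split; last by apply: Rideal_shift; exists c.
apply: Rideal_shift; exists c^-1%g => u.
by rewrite Hc mulKVg.
Qed.

Lemma Rideal_move (k : comPzRingType) n x0 t1 r :
  forall p, sumn (p ++ x0 :: t1 ++ r) = n ->
  forall x, @Rideal k n (p ++ x0 :: t1 ++ r) x <-> @Rideal k n (p ++ t1 ++ x0 :: r) x.
Proof.
elim: t1 => [|y t1 IH] p Hsum x //=.
rewrite (@Rideal_swap k n p x0 y (t1 ++ r) Hsum x).
have -> : p ++ y :: x0 :: t1 ++ r = rcons p y ++ x0 :: t1 ++ r by rewrite cat_rcons.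
have -> : p ++ y :: t1 ++ x0 :: r = rcons p y ++ t1 ++ x0 :: r by rewrite cat_rcons.
apply: IH; rewrite -Hsum cat_rcons !sumn_cat /=; lia.
Qed.

Lemma Rideal_perm (k : comPzRingType) n s :
  forall t p, perm_eq s t -> sumn (p ++ s) = n ->
  forall x, @Rideal k n (p ++ s) x <-> @Rideal k n (p ++ t) x.
Proof.
elim: s => [|x0 s IH] t p Hp Hsum x.
  by move: Hp; rewrite perm_sym => /perm_nilP ->.
have Hx : x0 \in t by rewrite -(perm_mem Hp) mem_head.
move: Hp; case/splitPr: Hx => t1 t2 Hp.
have Hp' : perm_eq s (t1 ++ t2).
  by rewrite -(perm_cons x0) (perm_trans Hp) // (perm_catCA t1 [:: x0] t2).
have E1 : p ++ x0 :: s = rcons p x0 ++ s by rewrite cat_rcons.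
have E2 : p ++ x0 :: t1 ++ t2 = rcons p x0 ++ t1 ++ t2 by rewrite cat_rcons.
rewrite E1 (IH _ _ Hp') -?E1 // -E2.
apply: Rideal_move.
by rewrite -Hsum !sumn_cat /= (perm_sumn Hp').
Qed.

Theorem lemma2p4 (k : comPzRingType) (n : nat) (alpha beta : seq nat) :
  is_comp n alpha -> is_comp n beta -> anagrams alpha beta ->
  forall x : {ffun 'S_n -> k}, @Rideal k n alpha x <-> @Rideal k n beta x.
Proof.
move=> /andP [_ /eqP Ha] _ Han x.
have Hp : perm_eq alpha beta.
  have H1 := perm_sort geq alpha; have H2 := perm_sort geq beta.
  rewrite /anagrams /underlying in Han; rewrite Han in H1.
  by rewrite -H1 H2.
exact: (@Rideal_perm k n alpha beta [::] Hp Ha x).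
Qed.
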